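(* Consider two loci with $K$ alleles at locus A and $L$ at locus B, haplotype frequency path $\{X(t)=(X_{ij}(t)):t\in[0,T]\}$ in the simplex $\Delta_{KL-1}$ with marginals $X_{i\cdot}=\sum_l X_{il}$, $X_{\cdot j}=\sum_k X_{kj}$, and let $I_T=\int_0^T\sum_{i,j}\frac{(X_{ij}(t)-X_{i\cdot}(t)X_{\cdot j}(t))^2}{X_{ij}(t)}dt$ be finite and positive. For a known drift component $c$, define the recombination estimator $\hat\rho[c]=I_T^{-1}\int_0^T\sum_{i=1}^K\sum_{j=1}^L\frac{X_{i\cdot}(t)X_{\cdot j}(t)}{X_{ij}(t)}\,d\widetilde X^{c}_{ij}(t)$ with $\widetilde X^c_{ij}(t)=X_{ij}(t)-\int_0^tc_{ij}(X(s))ds$. Let $c^{\mathrm{mut}}_{ij}(x)=\frac{\theta_A}{2}\sum_{k}x_{kj}(P^A_{ki}-\delta_{ik})+\frac{\theta_B}{2}\sum_l x_{il}(P^B_{lj}-\delta_{jl})$ and $$c^{\mathrm{sel}}_{ij}(x)=c^{\mathrm{mut}}_{ij}(x)+\frac{x_{ij}}{2}\sum_{k=1}^K\sum_{l=1}^L\Big(s_{ij,kl}x_{kl}-\sum_{m=1}^K\sum_{n=1}^L s_{kl,mn}x_{kl}x_{mn}\Big).$$ If selection is non-epistatic, i.e. $s_{ij,kl}=s^A_{ik}+s^B_{jl}$ for some constants $s^A_{ik},s^B_{jl}$, then $\hat\rho[c^{\mathrm{sel}}]=\hat\rho[c^{\mathrm{mut}}]$.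
   Context: This is the model of a two-locus Wright--Fisher diffusion with recombination drift $\rho(x_{i\cdot}x_{\cdot j}-x_{ij})$, mutation at rates $\theta_A/2,\theta_B/2$ with stochastic transition matrices $P^A,P^B$, and diploid epistatic selection in which an individual carrying haplotypes $(i,j)$ and $(k,l)$ has selective parameter $s_{ij,kl}$; $\hat\rho[c]$ is the maximum-likelihood recombination estimator computed when the known part of the drift is taken to be $c$. *)

(* Defs.v *)
From mathcomp Require Import all_boot all_order all_algebra.
From mathcomp Require Import all_classical all_reals all_analysis.
Set Implicit Arguments. Unset Strict Implicit. Unset Printing Implicit Defensive.
Import Order.TTheory GRing.Theory Num.Theory.
Local Open Scope classical_set_scope.
Local Open Scope ring_scope.

Section TwoLocus.
Variables (R : realType) (K L : nat).

Definition hap := 'I_K -> 'I_L -> R.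

Definition margA (x : hap) (i : 'I_K) : R := \sum_(l < L) x i l.
Definition margB (x : hap) (j : 'I_L) : R := \sum_(k < K) x k j.

Definition in_simplex (x : hap) : Prop :=
  (forall i j, 0 <= x i j) /\ \sum_(i < K) \sum_(j < L) x i j = 1.

Definition stochastic_matrix n (P : 'I_n -> 'I_n -> R) : Prop :=
  (forall a b, 0 <= P a b) /\ (forall a, \sum_(b < n) P a b = 1).

Definition cmut (thA thB : R) (PA : 'I_K -> 'I_K -> R) (PB : 'I_L -> 'I_L -> R)
  (x : hap) (i : 'I_K) (j : 'I_L) : R :=
  thA / 2 * \sum_(k < K) x k j * (PA k i - (i == k)%:R)
  + thB / 2 * \sum_(l < L) x i l * (PB l j - (j == l)%:R).

Definition csel thA thB PA PB
  (s : 'I_K -> 'I_L -> 'I_K -> 'I_L -> R) (x : hap) (i : 'I_K) (j : 'I_L) : R :=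
  cmut thA thB PA PB x i j
  + x i j / 2 * \sum_(k < K) \sum_(l < L)
      (s i j k l * x k l
       - \sum_(m < K) \sum_(n < L) s k l m n * x k l * x m n).

Definition IT_integrand (X : R -> hap) (t : R) : R :=
  \sum_(i < K) \sum_(j < L)
     (X t i j - margA (X t) i * margB (X t) j) ^+ 2 / X t i j.

Definition IT (X : R -> hap) (T : R) : R :=
  Rintegral lebesgue_measure `[0, T] (IT_integrand X).

(* rho_hat[c], where the Ito integral
     S = int_0^T sum_ij X_i. X_.j / X_ij dX_ij(t)
   is supplied as the real number S, and
     int g dX~^c = int g dX - int g c(X(t)) dt. *)
Definition rho_hat (X : R -> hap) (T : R) (S : R) (c : hap -> 'I_K -> 'I_L -> R) : R :=
  (IT X T)^-1 *
  (S - Rintegral lebesgue_measure `[0, T]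
         (fun t => \sum_(i < K) \sum_(j < L)
                     margA (X t) i * margB (X t) j / X t i j * c (X t) i j)).

End TwoLocus.

(* Main.v *)
Require Import Defs.
From mathcomp Require Import all_boot all_order all_algebra.
From mathcomp Require Import all_classical all_reals all_analysis.
From mathcomp Require Import ring lra.
Import Order.TTheory GRing.Theory Num.Theory.
Local Open Scope classical_set_scope.
Local Open Scope ring_scope.

Lemma inner_sum (R : realType) (K L : nat) (x : hap R K L)
  (s : 'I_K -> 'I_L -> 'I_K -> 'I_L -> R)
  (sA : 'I_K -> 'I_K -> R) (sB : 'I_L -> 'I_L -> R)
  (hs : forall i j k l, s i j k l = sA i k + sB j l) i j :
  \sum_(k < K) \sum_(l < L) s i j k l * x k l =
  \sum_(k < K) sA i k * margA x k + \sum_(l < L) sB j l * margB x l.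
Proof.
under eq_bigr => k _ do under eq_bigr => l _ do rewrite hs mulrDl.
under eq_bigr => k _ do rewrite big_split /=.
rewrite big_split /=; congr (_ + _).
  by apply: eq_bigr => k _; rewrite /margA mulr_sumr.
rewrite exchange_big /=; apply: eq_bigr => l _; rewrite /margB mulr_sumr.
by [].
Qed.

Lemma key (R : realType) (K L : nat) (x : hap R K L)
  (s : 'I_K -> 'I_L -> 'I_K -> 'I_L -> R)
  (sA : 'I_K -> 'I_K -> R) (sB : 'I_L -> 'I_L -> R)
  (hs : forall i j k l, s i j k l = sA i k + sB j l)
  (h1 : \sum_(i < K) \sum_(j < L) x i j = 1) :
  \sum_(i < K) \sum_(j < L) margA x i * margB x j *
    (\sum_(k < K) \sum_(l < L)
      (s i j k l * x k l - \sum_(m < K) \sum_(n < L) s k l m n * x k l * x m n)) = 0.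
Proof.
set a := fun i => \sum_(k < K) sA i k * margA x k.
set b := fun j => \sum_(l < L) sB j l * margB x l.
have hin := @inner_sum _ _ _ x _ _ _ hs.
have hA : \sum_(i < K) margA x i = 1 by [].
have hB : \sum_(j < L) margB x j = 1 by rewrite -h1 exchange_big.
set sbar := \sum_(k < K) \sum_(l < L) \sum_(m < K) \sum_(n < L) s k l m n * x k l * x m n.
have hsbar : sbar = \sum_(k < K) margA x k * a k + \sum_(l < L) margB x l * b l.
  rewrite /sbar.
  have -> : \sum_(k < K) \sum_(l < L) \sum_(m < K) \sum_(n < L) s k l m n * x k l * x m n
     = \sum_(k < K) \sum_(l < L) x k l * (a k + b l).
    apply: eq_bigr => k _; apply: eq_bigr => l _.
    rewrite -hin mulr_sumr; apply: eq_bigr => m _; rewrite mulr_sumr.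
    by apply: eq_bigr => n _; rewrite mulrCA mulrA.
  under eq_bigr => k _ do under eq_bigr => l _ do rewrite mulrDr.
  under eq_bigr => k _ do rewrite big_split /=.
  rewrite big_split /=; congr (_ + _).
    by apply: eq_bigr => k _; rewrite /margA mulr_suml.
  rewrite exchange_big /=; apply: eq_bigr => l _; rewrite /margB mulr_suml.
  by [].
have -> : \sum_(i < K) \sum_(j < L) margA x i * margB x j *
    (\sum_(k < K) \sum_(l < L)
      (s i j k l * x k l - \sum_(m < K) \sum_(n < L) s k l m n * x k l * x m n))
  = \sum_(i < K) \sum_(j < L) (margA x i * a i * margB x j
      + margA x i * (margB x j * b j) - margA x i * (margB x j * sbar)).
  apply: eq_bigr => i _; apply: eq_bigr => j _.
  rewrite (eq_bigr (fun k => \sum_(l < L) s i j k l * x k l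
       - \sum_(l < L) \sum_(m < K) \sum_(n < L) s k l m n * x k l * x m n)); last first.
    by move=> k _; rewrite sumrB.
  rewrite sumrB hin -/sbar /a /b; ring.
under eq_bigr => i _ do rewrite sumrB big_split /= -!mulr_sumr -mulr_suml hB mul1r.
rewrite sumrB big_split /= -!mulr_suml hA mul1r hsbar.
by rewrite mulr1 mul1r subrr.
Qed.

Lemma aux (R : realType) (a b x c : R) : x != 0 -> a * b / x * (x / 2 * c) = 2^-1 * (a * b * c).
Proof. by move=> hx; field. Qed.

Theorem mainTheorem7 (R : realType) (K L : nat) (T : R)
  (X : R -> hap R K L)
  (hX : forall t, t \in `[0, T] -> in_simplex (X t))
  (hpos : forall t, t \in `[0, T] -> forall i j, 0 < X t i j)
  (hIfin : lebesgue_measure.-integrable `[0, T] (fun t => (IT_integrand X t)%:E))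
  (hIpos : 0 < IT X T)
  (thA thB : R) (PA : 'I_K -> 'I_K -> R) (PB : 'I_L -> 'I_L -> R)
  (hPA : stochastic_matrix PA) (hPB : stochastic_matrix PB)
  (s : 'I_K -> 'I_L -> 'I_K -> 'I_L -> R)
  (sA : 'I_K -> 'I_K -> R) (sB : 'I_L -> 'I_L -> R)
  (hs : forall i j k l, s i j k l = sA i k + sB j l)
  (S : R) :
  rho_hat X T S (csel thA thB PA PB s) = rho_hat X T S (cmut thA thB PA PB).
Proof.
rewrite /rho_hat; congr (_ * (_ - _)).
apply: eq_Rintegral => t ht0.
have ht : t \in `[0, T] by move: ht0; rewrite inE.
have hp := hpos t ht.
have [_ h1] := hX t ht.
rewrite /csel.
under eq_bigr => i _ do under eq_bigr => j _ do rewrite mulrDr.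
under eq_bigr => i _ do rewrite big_split /=.
rewrite big_split /=.
set Z := (X in _ + X).
suff -> : Z = 0 by rewrite addr0.
rewrite /Z.
transitivity (2^-1 * \sum_(i < K) \sum_(j < L) margA (X t) i * margB (X t) j *
    (\sum_(k < K) \sum_(l < L)
      (s i j k l * X t k l - \sum_(m < K) \sum_(n < L) s k l m n * X t k l * X t m n))); last first.
  by rewrite (@key _ _ _ (X t) _ _ _ hs h1) mulr0.
rewrite mulr_sumr.
apply: eq_bigr => i _; rewrite mulr_sumr; apply: eq_bigr => j _.
have := hp i j; rewrite lt0r => /andP[hne _].
exact: aux.
Qed.
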